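(* Let $(G_n)$ be a sequence of graphs, $G_n$ having vertex set $V$ with $|V|=n$, average degree $d$, minimum degree $\delta$, maximum degree $\Delta$, and let $\lambda=\lambda(n)$ satisfy $|\lambda_i|\le\lambda$ for all adjacency eigenvalues $\lambda_i$, $i\ge2$. Suppose $\Delta-\delta\le R\lambda$ for a constant $R>0$ and $\lambda/d\to0$. Then for all sufficiently large $n$, for all $U,W\subseteq V$, $$\left|e(U,W)-\frac{d}{n}|U||W|\right|\le\overline\lambda\sqrt{|U||W|},\qquad\text{where }\overline\lambda=(10R+1)\lambda.$$
   Context: Adjacency eigenvalues are ordered $\lambda_1\ge\dots\ge\lambda_n$. For $U,W\subseteq V$, $e(U,W)$ is the number of ordered pairs $(u,w)$ with $u\in U$, $w\in W$ and $u$ adjacent to $w$. *)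

(* Defs.v *)
From HB Require Import structures.
From mathcomp Require Import all_boot all_order all_algebra.
From mathcomp Require Import all_classical all_reals all_analysis.
Set Implicit Arguments. Unset Strict Implicit. Unset Printing Implicit Defensive.
Import Order.TTheory GRing.Theory Num.Theory.
Local Open Scope ring_scope.

Definition simple_graph (n : nat) (g : rel 'I_n) : Prop :=
  symmetric g /\ irreflexive g.

Definition deg (n : nat) (g : rel 'I_n) (v : 'I_n) : nat := #|[set w | g v w]|.

Definition maxdeg (n : nat) (g : rel 'I_n) : nat := (\max_(v : 'I_n) deg g v)%N.
(* deg v <= n, so n is a neutral element for the min over the vertices *)
Definition mindeg (n : nat) (g : rel 'I_n) : nat := (\big[minn/n]_(v : 'I_n) deg g v)%N.

Definition avgdeg (R : realType) (n : nat) (g : rel 'I_n) : R :=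
  (\sum_(v : 'I_n) deg g v)%:R / n%:R.

Definition adjmx (R : realType) (n : nat) (g : rel 'I_n) : 'M[R]_n :=
  \matrix_(i, j) (g i j)%:R.

(* s is the list of adjacency eigenvalues (with multiplicity) in
   nonincreasing order: lambda_1 = s`_0 >= ... >= lambda_n = s`_(n-1). *)
Definition adj_spectrum (R : realType) (n : nat) (g : rel 'I_n) (s : seq R) : Prop :=
  sorted (>=%R) s /\ char_poly (adjmx R g) = \prod_(x <- s) ('X - x%:P).

(* e(U,W): ordered pairs (u,w), u in U, w in W, u adjacent to w. *)
Definition edges_between (n : nat) (g : rel 'I_n) (U W : {set 'I_n}) : nat :=
  #|[set p : 'I_n * 'I_n | [&& p.1 \in U, p.2 \in W & g p.1 p.2]]|.

(* Main.v *)
Require Import Defs.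
From HB Require Import structures.
From mathcomp Require Import all_boot all_order all_algebra.
From mathcomp Require Import all_classical all_reals all_analysis.
From mathcomp Require Import complex ring lra.
Set Implicit Arguments. Unset Strict Implicit. Unset Printing Implicit Defensive.
Import Order.TTheory GRing.Theory Num.Theory.
Import numFieldNormedType.Exports.
Local Open Scope ring_scope.

Section CX. Variable R : realType.
Local Notation C := (R[i]).
Local Notation rc := (real_complex R).

Lemma rc_real (x : R) : rc x \is Num.real.
Proof. by apply/complex_realP; exists x. Qed.

Lemma conj_rc (x : R) : (rc x)^* = rc x.
Proof. exact/conj_Creal/rc_real. Qed.

Definition nm (z : C) : R := complex.Re `|z|.

Lemma nmE z : `|z| = rc (nm z).
Proof. by rewrite /nm RRe_real // normr_real. Qed.

Lemma nm_ge0 z : 0 <= nm z.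
Proof. by rewrite -(lecR (0 : R)) -nmE rmorph0. Qed.

Lemma norm_rc x : `|rc x| = rc `|x|.
Proof.
have [x0|x0] := leP 0 x.
  by rewrite !ger0_norm // -(rmorph0 rc) lecR.
by rewrite !ltr0_norm ?rmorphN // -(rmorph0 rc) ltcR.
Qed.

Lemma nm_rc x : nm (rc x) = `|x|.
Proof. by apply: complexI; rewrite -nmE norm_rc. Qed.

Lemma nm_sq z : rc (nm z ^+ 2) = z * z^*.
Proof. by rewrite rmorphXn; transitivity (`|z| ^+ 2); [rewrite nmE | exact: normCK]. Qed.

Variable n : nat.
Variable P : 'M[C]_n.

Definition co (f : 'I_n -> R) k := \sum_i rc (f i) * (P k i)^*.

Lemma co_conj f k : (co f k)^* = \sum_i rc (f i) * P k i.
Proof.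
rewrite /co rmorph_sum; apply: eq_bigr => i _.
by rewrite rmorphM /= conj_rc conjCK.
Qed.

Lemma prod_sums (x : C) (a b : 'I_n -> C) :
  x * (\sum_i a i) * (\sum_j b j) = \sum_i \sum_j x * a i * b j.
Proof.
rewrite -mulrA big_distrl big_distrr /=; apply: eq_bigr => i _.
rewrite big_distrr big_distrr /=; apply: eq_bigr => j _; ring.
Qed.

Lemma inner (w : 'I_n -> C) (f h : 'I_n -> R) :
  \sum_k w k * co f k * (co h k)^* =
  \sum_i \sum_j rc (f i) * (\sum_k (P k i)^* * w k * P k j) * rc (h j).
Proof.
under eq_bigr do rewrite co_conj /co prod_sums.
rewrite exchange_big; apply: eq_bigr => i _.
rewrite exchange_big; apply: eq_bigr => j _.
rewrite big_distrr big_distrl /=; apply: eq_bigr => k _.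
ring.
Qed.

Lemma co_lin (f h : 'I_n -> R) (t : R) k :
  co (fun i => f i - t * h i) k = co f k - rc t * co h k.
Proof.
rewrite /co mulr_sumr -sumrB; apply: eq_bigr => i _.
rewrite rmorphB rmorphM /=; ring.
Qed.


Lemma norm_chain (T1 M a b c c' Q Rr D : C) :
  `|T1 + M * a * b - D * (a * c * Rr + Q * c' * b + Q * Rr)| <=
  `|T1| + `|M| * `|a| * `|b| + `|D| * (`|a| * `|c| * `|Rr| + `|Q| * `|c'| * `|b| + `|Q| * `|Rr|).
Proof.
apply: (le_trans (ler_normB _ _)); apply: lerD.
  by apply: (le_trans (ler_normD _ _)); rewrite !normrM.
rewrite normrM; apply: ler_wpM2l => //.
apply: (le_trans (ler_normD _ _)); rewrite !normrM; apply: lerD => //.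
by apply: (le_trans (ler_normD _ _)); rewrite !normrM.
Qed.

Lemma sum_bound (I : finType) (Pr : pred I) (F : I -> C) (B : I -> R) :
  (forall i, Pr i -> `|F i| <= rc (B i)) ->
  `|\sum_(i | Pr i) F i| <= rc (\sum_(i | Pr i) B i).
Proof.
move=> h; apply: (le_trans (ler_norm_sum _ _ _)); rewrite rmorph_sum.
by apply: ler_sum.
Qed.

Lemma nm_le (z : C) (x : R) : `|z| <= rc x -> nm z <= x.
Proof. by rewrite nmE lecR. Qed.

Lemma cbound (k0 : 'I_n) (mu : 'I_n -> R) (lam dn : R) (a b c : 'I_n -> C) :
  (forall k, k != k0 -> `|mu k| <= lam) ->
  nm (\sum_k rc (mu k) * a k * (b k)^*
       - rc dn * (\sum_k a k * (c k)^*) * (\sum_k c k * (b k)^*))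
  <= lam * (\sum_(k | k != k0) nm (a k) * nm (b k))
     + `|mu k0 - dn * nm (c k0) ^+ 2| * nm (a k0) * nm (b k0)
     + `|dn| * (nm (a k0) * nm (c k0) * (\sum_(k | k != k0) nm (b k) * nm (c k))
        + (\sum_(k | k != k0) nm (a k) * nm (c k)) * nm (c k0) * nm (b k0)
        + (\sum_(k | k != k0) nm (a k) * nm (c k)) * (\sum_(k | k != k0) nm (b k) * nm (c k))).
Proof.
move=> hmu.
rewrite (bigD1 k0) //= [\sum_k a k * _](bigD1 k0) //= [\sum_k c k * _](bigD1 k0) //=.
set T1 := \sum_(k | k != k0) _.
set Q := \sum_(k | k != k0) a k * _.
set Rr := \sum_(k | k != k0) c k * _.
have E : rc (mu k0) * a k0 * (b k0)^* + T1 -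
     rc dn * (a k0 * (c k0)^* + Q) * (c k0 * (b k0)^* + Rr) =
   T1 + rc (mu k0 - dn * nm (c k0) ^+ 2) * a k0 * (b k0)^*
   - rc dn * (a k0 * (c k0)^* * Rr + Q * c k0 * (b k0)^* + Q * Rr).
  rewrite rmorphB rmorphM /= nm_sq; ring.
rewrite E.
have hT1 : nm T1 <= lam * (\sum_(k | k != k0) nm (a k) * nm (b k)).
  apply: nm_le; rewrite mulr_sumr; apply: sum_bound => k kk0.
  rewrite !normrM norm_conjC norm_rc !nmE -!rmorphM lecR -mulrA.
  apply: ler_wpM2r; last exact: hmu.
  by apply: mulr_ge0; apply: nm_ge0.
have hQ : nm Q <= \sum_(k | k != k0) nm (a k) * nm (c k).
  apply: nm_le; apply: sum_bound => k kk0.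
  by rewrite !normrM norm_conjC !nmE -!rmorphM.
have hR : nm Rr <= \sum_(k | k != k0) nm (b k) * nm (c k).
  apply: nm_le; apply: sum_bound => k kk0.
  by rewrite !normrM norm_conjC !nmE -!rmorphM mulrC.
have := norm_chain T1 (rc (mu k0 - dn * nm (c k0) ^+ 2)) (a k0) ((b k0)^*) ((c k0)^*) (c k0) Q Rr (rc dn).
rewrite !norm_conjC !norm_rc !nmE -!rmorphM -!rmorphD -!rmorphM -!rmorphD lecR => h.
apply: (le_trans h).
have := nm_ge0 (a k0); have := nm_ge0 (b k0); have := nm_ge0 (c k0);
have := nm_ge0 Q; have := nm_ge0 Rr; have := normr_ge0 dn; 
have := normr_ge0 (mu k0 - dn * nm (c k0) ^+ 2).
set m0 := `|_|; set D := `|dn|; set a0 := nm (a k0); set b0 := nm (b k0);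
set c0 := nm (c k0); set q := \sum_(k | k != k0) nm (a k) * nm (c k);
set r := \sum_(k | k != k0) nm (b k) * nm (c k).
move=> m00 D0 Rr0 Q0 c00 b00 a00.
apply: lerD; first by apply: lerD.
apply: ler_wpM2l => //.
have h1 : a0 * c0 * nm Rr <= a0 * c0 * r by apply: ler_wpM2l => //; apply: mulr_ge0.
have h2 : nm Q * c0 * b0 <= q * c0 * b0.
  by rewrite -!mulrA; apply: ler_wpM2r => //; apply: mulr_ge0.
have h3 : nm Q * nm Rr <= q * r by apply: ler_pM.
lra.
Qed.

End CX.

Section S. Variable R : realType.
Local Notation C := (R[i]).
Local Notation rc := (real_complex R).


Lemma char_poly_conj n (P B : 'M[C]_n) : P \in unitmx ->
  char_poly (invmx P *m B *m P) = char_poly B.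
Proof.
move=> Pu; rewrite /char_poly /char_poly_mx.
set Q := map_mx polyC P; set Q' := map_mx polyC (invmx P).
have QQ : Q' *m Q = 1%:M by rewrite -map_mxM mulVmx // map_mx1.
have -> : ('X%:M - map_mx polyC (invmx P *m B *m P)) = Q' *m ('X%:M - map_mx polyC B) *m Q.
  rewrite !map_mxM mulmxBr mulmxBl -!mulmxA; congr (_ - _).
  by rewrite mul_scalar_mx -scalemxAr QQ scalemx1.
rewrite !det_mulmx mulrC mulrA -det_mulmx.
by rewrite [Q *m Q']mulmx1C // det1 mul1r.
Qed.

Lemma spectral_real n (A : 'M[R]_n) : A^T = A ->
  exists (P : 'M[C]_n) (mu : 'I_n -> R),
    [/\ forall i j, \sum_k (P k i)^* * P k j = (i == j)%:R,
        forall i j, rc (A i j) = \sum_k (P k i)^* * rc (mu k) * P k j,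
        forall k j, \sum_i P k i * rc (A i j) = rc (mu k) * P k j &
        char_poly A = \prod_(k < n) ('X - (mu k)%:P)].
Proof.
move=> Asym.
set Ac := map_mx rc A.
have Ah : Ac \is hermsymmx.
  apply: realsym_hermsym.
    rewrite is_hermitianmxE expr0 scale1r; apply/eqP/matrixP => i j.
    by rewrite !mxE -[in RHS]Asym mxE.
  by apply/mxOverP => i j; rewrite mxE rc_real.
have /orthomx_spectralP AE := hermitian_normalmx Ah.
have Dr := hermitian_spectral_diag_real Ah.
set P := spectralmx Ac in AE; set D := spectral_diag Ac in AE Dr.
have Pu : P \is unitarymx by apply: spectral_unitarymx.
have Pun := unitarymx_unit Pu.
have PP : invmx P *m P = 1%:M by rewrite mulVmx.
rewrite (invmx_unitary Pu) in AE PP.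
pose mu k := complex.Re (D 0 k).
have Dmu k : D 0 k = rc (mu k).
  by rewrite /mu RRe_real //; move/mxOverP: Dr => /(_ 0 k).
exists P, mu; split.
- move=> i j; move/matrixP: PP => /(_ i j); rewrite !mxE => <-.
  by apply: eq_bigr => k _; rewrite !mxE.
- move=> i j; move/matrixP: AE => /(_ i j); rewrite /Ac !mxE => ->.
  apply: eq_bigr => k _; rewrite !mxE; congr (_ * _).
  rewrite (bigD1 k) //= big1 ?addr0; last first.
    by move=> l lk; rewrite !mxE (negPf lk) mulr0n mulr0.
  by rewrite !mxE eqxx mulr1n Dmu.
- move=> k j.
  have PA : P *m Ac = diag_mx D *m P.
    have PPt : P *m (P^t*)%sesqui = 1%:M by apply/unitarymxP.
    by rewrite AE !mulmxA PPt mul1mx.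
  move/matrixP: PA => /(_ k j); rewrite !mxE => PA.
  rewrite (eq_bigr (fun i => P k i * Ac i j)); last by move=> i _; rewrite mxE.
  rewrite PA (bigD1 k) //= big1 ?addr0; last first.
    by move=> l lk; rewrite !mxE eq_sym (negPf lk) mulr0n mul0r.
  by rewrite !mxE eqxx mulr1n Dmu.
- apply: (map_poly_inj rc).
  rewrite map_char_poly -/Ac {1}AE -(invmx_unitary Pu) char_poly_conj //.
  rewrite char_poly_trig ?diag_mx_is_trig // rmorph_prod.
  apply: eq_bigr => k _; by rewrite rmorphB /= map_polyX map_polyC !mxE eqxx mulr1n Dmu.
Qed.
End S.

Section Core. Variable R : realType.

Lemma sqle (u v : R) : 0 <= v -> u ^+ 2 <= v ^+ 2 -> u <= v.
Proof. move=> v0 h; nra. Qed.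

Lemma core (lam Rc d N X Y a0 b0 g0 p q r G mu0 : R) :
  0 <= lam -> 0 < Rc -> 0 < d -> 0 < N -> 2 * lam <= d -> 4 * Rc * lam <= d ->
  0 <= X -> 0 <= Y -> 0 <= a0 -> a0 <= X -> 0 <= b0 -> b0 <= Y -> 0 <= g0 ->
  0 <= p -> p <= X * Y -> 0 <= q -> 0 <= r -> 0 <= G ->
  q ^+ 2 <= X ^+ 2 * G -> r ^+ 2 <= Y ^+ 2 * G -> g0 ^+ 2 + G = N ->
  (mu0 - d) ^+ 2 * g0 ^+ 2 + (d - lam) ^+ 2 * G <= N * Rc ^+ 2 * lam ^+ 2 ->
  lam * p + `|mu0 - d * g0 ^+ 2 / N| * a0 * b0
    + d / N * (a0 * g0 * r + g0 * b0 * q + q * r)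
  <= (10 * Rc + 1) * lam * X * Y.
Proof.
move=> l0 R0 d0 N0 ld Rld X0 Y0 a00 a0X b00 b0Y g00 p0 pXY q0 r0 G0 qG rG gN H.
pose t := 2 * Rc * lam / d.
have t0 : 0 <= t by rewrite /t; apply: divr_ge0 => //; nra.
have dt : d * t = 2 * Rc * lam by rewrite /t mulrC divfK ?gt_eqF.
have th : t <= 1 / 2.
  by rewrite /t ler_pdivrMr //; lra.
clearbody t.
have E1 : G <= N * t ^+ 2.
  have : d ^+ 2 * G <= 4 * (N * Rc ^+ 2 * lam ^+ 2).
    have : (d / 2) ^+ 2 * G <= (d - lam) ^+ 2 * G.
      apply: ler_wpM2r => //; rewrite ler_pXn2r ?nnegrE //; lra.
    have : 0 <= (mu0 - d) ^+ 2 * g0 ^+ 2 by apply: mulr_ge0; apply: sqr_ge0.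
    lra.
  move=> h; have e : d ^+ 2 * (N * t ^+ 2) = 4 * (N * Rc ^+ 2 * lam ^+ 2).
    by rewrite mulrCA -exprMn dt; ring.
  rewrite -e in h. rewrite -(@ler_pM2l _ (d ^+ 2)) //; exact: exprn_gt0.
have qr : q * r <= X * Y * G.
  apply: sqle; first by apply: mulr_ge0 => //; apply: mulr_ge0.
  rewrite !exprMn; have -> : (X ^+ 2 * Y ^+ 2 * G ^+ 2) = (X ^+ 2 * G) * (Y ^+ 2 * G) by ring.
  apply: ler_pM => //; apply: exprn_ge0 => //.
have gr : g0 * r <= N * Y * t.
  apply: sqle; first by apply: mulr_ge0 => //; apply: mulr_ge0 => //; apply: ltW.
  have g0N : g0 ^+ 2 <= N by lra.
  rewrite !exprMn; apply: (le_trans (ler_pM _ _ g0N rG)) => //; try apply: exprn_ge0 => //.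
  have : Y ^+ 2 * G <= Y ^+ 2 * (N * t ^+ 2) by apply: ler_wpM2l => //; apply: exprn_ge0.
  move=> h; have := ler_wpM2l (ltW N0) h; lra.
have gq : g0 * q <= N * X * t.
  apply: sqle; first by apply: mulr_ge0 => //; apply: mulr_ge0 => //; apply: ltW.
  have g0N : g0 ^+ 2 <= N by lra.
  rewrite !exprMn; apply: (le_trans (ler_pM _ _ g0N qG)) => //; try apply: exprn_ge0 => //.
  have : X ^+ 2 * G <= X ^+ 2 * (N * t ^+ 2) by apply: ler_wpM2l => //; apply: exprn_ge0.
  move=> h; have := ler_wpM2l (ltW N0) h; lra.
have mud : `|mu0 - d| <= 2 * Rc * lam.
  apply: sqle; first nra.
  rewrite real_normK ?num_real //.
  have g0N : 3 / 4 * N <= g0 ^+ 2.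
    have : N * t ^+ 2 <= N * (1 / 4) by apply: ler_wpM2l; [lra| nra].
    lra.
  have h1 : (mu0 - d) ^+ 2 * (3 / 4 * N) <= N * Rc ^+ 2 * lam ^+ 2.
    apply: (le_trans _ H); have : 0 <= (d - lam) ^+ 2 * G by apply: mulr_ge0 => //; apply: sqr_ge0.
    have : (mu0 - d) ^+ 2 * (3 / 4 * N) <= (mu0 - d) ^+ 2 * g0 ^+ 2 by apply: ler_wpM2l => //; apply: sqr_ge0.
    lra.
  have : (mu0 - d) ^+ 2 * 3 <= 4 * (Rc ^+ 2 * lam ^+ 2).
    rewrite -(@ler_pM2r _ N) //; lra.
  move=> h2; nra.
have dG : d * G / N <= Rc * lam.
  rewrite ler_pdivrMr //.
  have : d * G <= d * (N * t ^+ 2) by apply: ler_wpM2l => //; apply: ltW.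
  have : d * (N * t ^+ 2) = N * (2 * Rc * lam) * t by rewrite -dt; ring.
  move=> e h; rewrite e in h; apply: (le_trans h).
  have : N * (2 * Rc * lam) * t <= N * (2 * Rc * lam) * (1 / 2).
    apply: ler_wpM2l => //; apply: mulr_ge0; nra.
  lra.
have M1 : `|mu0 - d * g0 ^+ 2 / N| <= 3 * Rc * lam.
  have -> : mu0 - d * g0 ^+ 2 / N = (mu0 - d) + d * G / N.
    have GE : G = N - g0 ^+ 2 by lra.
    by rewrite GE; field; exact: lt0r_neq0.
  apply: (le_trans (ler_normD _ _)); rewrite [`|d * G / N|]ger0_norm; last first.
    by apply: divr_ge0; [apply: mulr_ge0 => //; apply: ltW | apply: ltW].
  lra.
have T1 : lam * p <= lam * (X * Y) by apply: ler_wpM2l.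
have T2 : `|mu0 - d * g0 ^+ 2 / N| * a0 * b0 <= 3 * Rc * lam * X * Y.
  rewrite -mulrA -[_ * X * Y]mulrA; apply: ler_pM => //.
    by apply: mulr_ge0.
  by apply: ler_pM.
have T3 : d / N * (a0 * g0 * r + g0 * b0 * q + q * r) <= 5 * Rc * lam * X * Y.
  rewrite mulrC mulrA ler_pdivrMr //.
  have h1 : a0 * (g0 * r) <= X * (N * Y * t) by apply: ler_pM => //; apply: mulr_ge0.
  have h2 : b0 * (g0 * q) <= Y * (N * X * t) by apply: ler_pM => //; apply: mulr_ge0.
  have h3 : d * (q * r) <= d * (X * Y * G) by apply: ler_wpM2l => //; apply: ltW.
  have h4 : d * (X * Y * G) <= X * Y * (N * (Rc * lam)).
    have := dG; rewrite ler_pdivrMr // => h.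
    have XY0 : 0 <= X * Y by apply: mulr_ge0.
    nra.
  have e : d * (X * (N * Y * t)) = 2 * Rc * lam * X * Y * N by rewrite -dt; ring.
  have e2 : d * (Y * (N * X * t)) = 2 * Rc * lam * X * Y * N by rewrite -dt; ring.
  have d0' : 0 <= d by apply: ltW.
  have h1' : d * (a0 * (g0 * r)) <= d * (X * (N * Y * t)) by apply: ler_wpM2l.
  have h2' : d * (b0 * (g0 * q)) <= d * (Y * (N * X * t)) by apply: ler_wpM2l.
  rewrite e in h1'; rewrite e2 in h2'.
  have -> : (a0 * g0 * r + g0 * b0 * q + q * r) * d =
    d * (a0 * (g0 * r)) + d * (b0 * (g0 * q)) + d * (q * r) by ring.
  nra.
have XY0 : 0 <= Rc * lam * X * Y by apply: mulr_ge0 => //; apply: mulr_ge0 => //; apply: mulr_ge0 => //; apply: ltW.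
have -> : (10 * Rc + 1) * lam * X * Y = lam * (X * Y) + 10 * (Rc * lam * X * Y) by ring.
lra.
Qed.
End Core.

Section CS. Variable R : realType.
Lemma CS (I : finType) (P : pred I) (u v : I -> R) :
  (\sum_(i | P i) u i * v i) ^+ 2 <=
  (\sum_(i | P i) u i ^+ 2) * (\sum_(i | P i) v i ^+ 2).
Proof.
have H0 : 0 <= \sum_(i | P i) \sum_(j | P j) (u i * v j - u j * v i) ^+ 2.
  by apply: sumr_ge0 => i _; apply: sumr_ge0 => j _; apply: sqr_ge0.
have E1 : (\sum_(i | P i) u i ^+ 2) * (\sum_(i | P i) v i ^+ 2) =
   \sum_(i | P i) \sum_(j | P j) u i ^+ 2 * v j ^+ 2.
  by rewrite big_distrl; apply: eq_bigr => i _; rewrite big_distrr.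
have E2 : (\sum_(i | P i) u i * v i) ^+ 2 =
   \sum_(i | P i) \sum_(j | P j) (u i * v i) * (u j * v j).
  by rewrite expr2 big_distrl; apply: eq_bigr => i _; rewrite big_distrr.
have E3 : \sum_(i | P i) \sum_(j | P j) u j ^+ 2 * v i ^+ 2 =
   \sum_(i | P i) \sum_(j | P j) u i ^+ 2 * v j ^+ 2.
  by rewrite exchange_big.
have : \sum_(i | P i) \sum_(j | P j) (u i * v j - u j * v i) ^+ 2 =
  \sum_(i | P i) \sum_(j | P j) u i ^+ 2 * v j ^+ 2
  + \sum_(i | P i) \sum_(j | P j) u j ^+ 2 * v i ^+ 2
  - 2 * \sum_(i | P i) \sum_(j | P j) (u i * v i) * (u j * v j).
  rewrite -big_split /= mulr_sumr -sumrB; apply: eq_bigr => i _.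
  rewrite -big_split /= mulr_sumr -sumrB; apply: eq_bigr => j _.
  ring.
rewrite E3 -E1 -E2 => E; rewrite E in H0; lra.
Qed.
End CS.

Section G. Variable R : realType.

Lemma pick_k0 (n : nat) (s : seq R) (mu : 'I_n -> R) (lam : R) :
  (0 < n)%N -> perm_eq s [seq mu k | k <- enum 'I_n] ->
  (forall i : nat, (0 < i < n)%N -> `|s`_i| <= lam) ->
  exists k0 : 'I_n, forall k, k != k0 -> `|mu k| <= lam.
Proof.
move=> n0 hp hs.
pose Pr := fun x : R => lam < `|x|.
have sz : size s = n by rewrite (perm_size hp) size_map size_enum_ord.
have cs : (count Pr s <= 1)%N.
  case: s hp hs sz => [//|x s'] hp hs sz /=.
  suff -> : count Pr s' = 0%N by case: (Pr x).
  apply/eqP; rewrite -leqn0 leqNgt -has_count; apply/hasPn => y ys'.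
  have [i ilt <-] : exists2 i, (i < size s')%N & nth 0 s' i = y.
    by exists (index y s'); [rewrite index_mem | rewrite nth_index].
  rewrite /Pr -leNgt; have := hs i.+1; rewrite /= -sz /=; apply.
  by rewrite ltnS ilt.
have cm : (count Pr [seq mu k | k <- enum 'I_n] <= 1)%N.
  by rewrite -(permP hp).
case: (pickP (fun k => Pr (mu k))) => [k0 hk0 | none].
  exists k0 => k kk0; rewrite leNgt; apply/negP => hk.
  suff : (2 <= count Pr [seq mu k | k <- enum 'I_n])%N by case: (count _ _) cm => [|[|]].
  rewrite count_map -size_filter.
  have -> : 2%N = size [:: k; k0] by [].
  apply: uniq_leq_size; first by rewrite /= inE kk0.
  move=> j; rewrite !inE => /orP[] /eqP ->; rewrite mem_filter mem_enum andbT //=.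
exists (Ordinal n0) => k _; rewrite leNgt; apply/negP => hk.
by have := none k; rewrite /= /Pr hk.
Qed.

Lemma min_le (I : eqType) (r : seq I) (F : I -> nat) (x : nat) j :
  j \in r -> (\big[minn/x]_(i <- r) F i <= F j)%N.
Proof.
elim: r => [//|a r IH]; rewrite inE big_cons => /orP[/eqP <-|jr].
  exact: geq_minl.
by apply: leq_trans (geq_minr _ _) (IH jr).
Qed.

Variable n : nat.
Variable g : rel 'I_n.

Lemma deg_sum v : (deg g v)%:R = \sum_j adjmx R g v j.
Proof.
rewrite /deg -sum1_card natr_sum big_mkcond /=; apply: eq_bigr => j _.
by rewrite inE mxE; case: (g v j).
Qed.

Lemma edges_sum (U W : {set 'I_n}) :
  (edges_between g U W)%:R =
  \sum_i \sum_j (i \in U)%:R * adjmx R g i j * (j \in W)%:R :> R.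
Proof.
rewrite /edges_between -sum1_card natr_sum big_mkcond /= pair_big /=.
apply: eq_bigr => [[i j]] _ /=; rewrite inE mxE /=.
by case: (i \in U); case: (j \in W); case: (g i j); rewrite /= ?mulr1 ?mul1r ?mulr0 ?mul0r.
Qed.

Lemma card_sumR (U : {set 'I_n}) : #|U|%:R = \sum_i (i \in U)%:R :> R.
Proof.
rewrite -sum1_card natr_sum big_mkcond /=; apply: eq_bigr => i _.
by case: (i \in U).
Qed.

Lemma mindeg_le v : (mindeg g <= deg g v)%N.
Proof. by apply: min_le; rewrite mem_index_enum. Qed.

Lemma maxdeg_ge v : (deg g v <= maxdeg g)%N.
Proof. exact: leq_bigmax. Qed.

End G.

Section Key. Variable R : realType.
Local Notation C := (R[i]).
Local Notation rc := (real_complex R).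

Lemma nmM (z w : C) : nm (z * w) = nm z * nm w.
Proof. by apply: complexI; rewrite rmorphM /= -!nmE normrM. Qed.

Lemma core' (lam Rc d N X Y a0 b0 g0 p q r G mu0 : R) :
  0 <= lam -> 0 < Rc -> 0 < d -> 0 < N -> 2 * lam <= d -> 4 * Rc * lam <= d ->
  0 <= X -> 0 <= Y -> 0 <= a0 -> a0 <= X -> 0 <= b0 -> b0 <= Y -> 0 <= g0 ->
  0 <= p -> p <= X * Y -> 0 <= q -> 0 <= r -> 0 <= G ->
  q ^+ 2 <= X ^+ 2 * G -> r ^+ 2 <= Y ^+ 2 * G -> g0 ^+ 2 + G = N ->
  (mu0 - d) ^+ 2 * g0 ^+ 2 + (d - lam) ^+ 2 * G <= N * Rc ^+ 2 * lam ^+ 2 ->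
  lam * p + `|mu0 - d / N * g0 ^+ 2| * a0 * b0
    + `|d / N| * (a0 * g0 * r + q * g0 * b0 + q * r)
  <= (10 * Rc + 1) * lam * X * Y.
Proof.
move=> l0 R0 d0 N0 *; rewrite [`|d / N|]ger0_norm; last first.
  by apply: divr_ge0; apply: ltW.
have -> : d / N * g0 ^+ 2 = d * g0 ^+ 2 / N by rewrite mulrAC.
have -> : q * g0 * b0 = g0 * b0 * q by ring.
by apply: (@core R lam Rc d N X Y a0 b0 g0 p q r G mu0).
Qed.

Lemma key (n : nat) (g : rel 'I_n) (lam Rc : R) :
  simple_graph g ->
  (exists s : seq R, adj_spectrum g s /\
     forall i : nat, (0 < i < n)%N -> `|s`_i| <= lam) ->
  0 < Rc ->
  (maxdeg g)%:R - (mindeg g)%:R <= Rc * lam ->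
  (0 < avgdeg R g -> 2 * lam <= avgdeg R g /\ 4 * Rc * lam <= avgdeg R g) ->
  forall U W : {set 'I_n},
      `| (edges_between g U W)%:R
         - avgdeg R g / n%:R * #|U|%:R * #|W|%:R |
      <= (10 * Rc + 1) * lam * Num.sqrt (#|U|%:R * #|W|%:R).
Proof.
move=> [gsym girr] [s [[ssort sE] slam]] Rc0 HdR Hd U W.
set A := adjmx R g.
set d := avgdeg R g.
pose x := fun i : 'I_n => ((i \in U)%:R : R).
pose y := fun i : 'I_n => ((i \in W)%:R : R).
pose z := fun i : 'I_n => (1 : R).
have dmm : (mindeg g <= maxdeg g)%N.
  case: n g {gsym girr HdR Hd A d x y z s ssort sE slam U W} => [|n'] g'.
    by rewrite /mindeg /maxdeg !big_ord0.
  exact: leq_trans (mindeg_le _ ord0) (maxdeg_ge _ ord0).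
have lam0 : 0 <= lam.
  have : 0 <= Rc * lam by apply: le_trans HdR; rewrite subr_ge0 ler_nat.
  by rewrite pmulr_rge0.
have degE v : (deg g v)%:R = \sum_j A v j by rewrite deg_sum.
have sumdeg : \sum_v (deg g v)%:R = d * n%:R :> R.
  have [n0|n0] := posnP n.
    have -> : (n%:R : R) = 0 by rewrite n0.
    by rewrite mulr0 big1 // => v _; have := ltn_ord v; rewrite [X in (_ < X)%N]n0.
  by rewrite /d /avgdeg -natr_sum divfK // pnatr_eq0 -lt0n.
have d0 : 0 <= d by rewrite /d /avgdeg; apply: divr_ge0.
have xb i : x i = 0 \/ x i = 1 by rewrite /x; case: (i \in U); [right|left].
have yb i : y i = 0 \/ y i = 1 by rewrite /y; case: (i \in W); [right|left].
have A0 i j : 0 <= A i j by rewrite mxE.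
have eE : (edges_between g U W)%:R = \sum_i \sum_j x i * A i j * y j.
  by rewrite edges_sum.
have sqrt0 : 0 <= Num.sqrt (#|U|%:R * #|W|%:R : R) by apply: sqrtr_ge0.
have [dz|dpos] := eqVneq d 0.
  have e0 : (edges_between g U W)%:R = 0 :> R.
    apply/eqP; rewrite eq_le ler0n andbT eE.
    have : \sum_i \sum_j x i * A i j * y j <= \sum_i (deg g i)%:R.
      apply: ler_sum => i _; rewrite degE; apply: ler_sum => j _.
      by case: (xb i) => ->; case: (yb j) => ->; rewrite ?mul0r ?mulr0 ?mul1r ?mulr1.
    by rewrite sumdeg dz mul0r.
  rewrite e0 -/d dz !mul0r subr0 normr0; apply: mulr_ge0 => //.
  by apply: mulr_ge0 => //; apply: addr_ge0 => //; apply: mulr_ge0 => //; apply: ltW.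
have dp : 0 < d by rewrite lt_def dpos d0.
have [ld Rld] := Hd dp.
move: ld Rld; rewrite -/d => ld Rld.
have n0 : (0 < n)%N.
  rewrite lt0n; apply/negP => /eqP n0; move: dp; rewrite /d /avgdeg.
  have -> : (n%:R : R) = 0 by rewrite n0.
  by rewrite invr0 mulr0 ltxx.
have Nn : 0 < (n%:R : R) by rewrite ltr0n.
have AT : A^T = A by apply/matrixP => i j; rewrite !mxE gsym.
have [P [mu [orth Arep eig cpA]]] := spectral_real AT.
have hp : perm_eq s [seq mu k | k <- enum 'I_n].
  apply: prod_XsubC_eq; rewrite -sE -/A cpA big_map big_enum /=.
  by apply: eq_bigl => k.
have [k0 hk0] := pick_k0 n0 hp slam.
have orth1 i j : \sum_k (P k i)^* * 1 * P k j = (i == j)%:R.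
  by under eq_bigr do rewrite mulr1; exact: orth.
have inner1 f h : \sum_k co P f k * (co P h k)^* = rc (\sum_i f i * h i).
  have := inner P (fun _ => 1) f h.
  under eq_bigr do rewrite mul1r.
  move=> ->; rewrite rmorph_sum; apply: eq_bigr => i _.
  under eq_bigr do rewrite orth1.
  rewrite (bigD1 i) //= big1 ?addr0 => [|j ji]; last by rewrite eq_sym (negPf ji) mulr0 mul0r.
  by rewrite eqxx mulr1 rmorphM.
have innerA f h : \sum_k rc (mu k) * co P f k * (co P h k)^* =
    rc (\sum_i \sum_j f i * A i j * h j).
  rewrite inner rmorph_sum; apply: eq_bigr => i _.
  rewrite rmorph_sum; apply: eq_bigr => j _.
  by rewrite -Arep !rmorphM.
have pars f : \sum_k nm (co P f k) ^+ 2 = \sum_i f i ^+ 2.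
  apply: complexI; rewrite rmorph_sum /=.
  under eq_bigr do rewrite nm_sq.
  by rewrite inner1; congr (rc _); apply: eq_bigr => i _; rewrite expr2.
have eigco h k : co P (fun i => \sum_j A i j * h j) k = rc (mu k) * co P h k.
  have eigc j : \sum_i (P k i)^* * rc (A i j) = rc (mu k) * (P k j)^*.
    have := congr1 Num.conj_op (eig k j); rewrite rmorph_sum rmorphM /= conj_rc => <-.
    by apply: eq_bigr => i _; rewrite rmorphM /= conj_rc.
  rewrite /co mulr_sumr.
  under eq_bigr do rewrite rmorph_sum big_distrl /=.
  rewrite exchange_big; apply: eq_bigr => j _.
  rewrite mulrCA -eigc mulr_sumr; apply: eq_bigr => i _.
  rewrite rmorphM /=; ring.
set a := co P x; set b := co P y; set c := co P z.
have x2 i : x i ^+ 2 = x i by case: (xb i) => ->; rewrite ?expr0n ?expr1n.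
have y2 i : y i ^+ 2 = y i by case: (yb i) => ->; rewrite ?expr0n ?expr1n.
have Ua : \sum_k nm (a k) ^+ 2 = #|U|%:R.
  by rewrite pars (card_sumR R U); apply: eq_bigr => i _; rewrite x2.
have Wb : \sum_k nm (b k) ^+ 2 = #|W|%:R.
  by rewrite pars (card_sumR R W); apply: eq_bigr => i _; rewrite y2.
have Nc : \sum_k nm (c k) ^+ 2 = n%:R.
  by rewrite pars (eq_bigr (fun _ => 1)) ?sumr_const ?card_ord // => i _; rewrite expr1n.
have Ucx : rc #|U|%:R = \sum_k a k * (c k)^*.
  by rewrite inner1 (card_sumR R U); congr (rc _); apply: eq_bigr => i _; rewrite mulr1.
have Wcy : rc #|W|%:R = \sum_k c k * (b k)^*.
  by rewrite inner1 (card_sumR R W); congr (rc _); apply: eq_bigr => i _; rewrite mul1r.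
have eA : rc (edges_between g U W)%:R = \sum_k rc (mu k) * a k * (b k)^*.
  by rewrite innerA eE.
have cb := @cbound R n k0 mu lam (d / n%:R) a b c hk0.
rewrite -eA -Ucx -Wcy -!rmorphM -rmorphB nm_rc in cb.
apply: (le_trans cb).
have U0 : 0 <= (#|U|%:R : R) by apply: ler0n.
have W0 : 0 <= (#|W|%:R : R) by apply: ler0n.
rewrite sqrtrM // mulrA.
set X := Num.sqrt (#|U|%:R : R); set Y := Num.sqrt (#|W|%:R : R).
have X0 : 0 <= X by apply: sqrtr_ge0.
have Y0 : 0 <= Y by apply: sqrtr_ge0.
have X2 : X ^+ 2 = #|U|%:R by rewrite sqr_sqrtr.
have Y2 : Y ^+ 2 = #|W|%:R by rewrite sqr_sqrtr.
have nmg k (F : 'I_n -> C) : 0 <= nm (F k) by apply: nm_ge0.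
have split (F : 'I_n -> R) : \sum_k F k = F k0 + \sum_(k | k != k0) F k.
  by rewrite (bigD1 k0).
have sq0 (F : 'I_n -> C) : 0 <= \sum_(k | k != k0) nm (F k) ^+ 2.
  by apply: sumr_ge0 => k _; apply: sqr_ge0.
have le0 (F : 'I_n -> C) : nm (F k0) ^+ 2 <= \sum_k nm (F k) ^+ 2.
  by rewrite split lerDl.
have le1 (F : 'I_n -> C) : \sum_(k | k != k0) nm (F k) ^+ 2 <= \sum_k nm (F k) ^+ 2.
  by rewrite split lerDr; apply: sqr_ge0.
set p := \sum_(k | k != k0) nm (a k) * nm (b k).
set q := \sum_(k | k != k0) nm (a k) * nm (c k).
set r := \sum_(k | k != k0) nm (b k) * nm (c k).
set G := \sum_(k | k != k0) nm (c k) ^+ 2.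
have p0 : 0 <= p by apply: sumr_ge0 => k _; apply: mulr_ge0.
have q0 : 0 <= q by apply: sumr_ge0 => k _; apply: mulr_ge0.
have r0 : 0 <= r by apply: sumr_ge0 => k _; apply: mulr_ge0.
have G0 : 0 <= G by apply: sq0.
have aX : nm (a k0) <= X by apply: sqle => //; rewrite X2 -Ua; apply: le0.
have bY : nm (b k0) <= Y by apply: sqle => //; rewrite Y2 -Wb; apply: le0.
have pXY : p <= X * Y.
  apply: sqle; first by apply: mulr_ge0.
  apply: (le_trans (CS (fun k => k != k0) (fun k => nm (a k)) (fun k => nm (b k)))).
  rewrite exprMn X2 Y2 -Ua -Wb.
  by apply: ler_pM; [apply: sq0 | apply: sq0 | apply: le1 | apply: le1].
have qG : q ^+ 2 <= X ^+ 2 * G.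
  apply: (le_trans (CS (fun k => k != k0) (fun k => nm (a k)) (fun k => nm (c k)))).
  rewrite X2 -Ua.
  by apply: ler_wpM2r => //; apply: le1.
have rG : r ^+ 2 <= Y ^+ 2 * G.
  apply: (le_trans (CS (fun k => k != k0) (fun k => nm (b k)) (fun k => nm (c k)))).
  rewrite Y2 -Wb.
  by apply: ler_wpM2r => //; apply: le1.
have gN : nm (c k0) ^+ 2 + G = n%:R by rewrite -Nc split.
pose u := fun i => \sum_j A i j * z j - d * z i.
have cou k : co P u k = rc (mu k - d) * c k.
  by rewrite /u co_lin eigco rmorphB /= mulrBl.
have nmu k : nm (co P u k) ^+ 2 = (mu k - d) ^+ 2 * nm (c k) ^+ 2.
  by rewrite cou nmM nm_rc exprMn real_normK ?num_real.
have dmin : (mindeg g)%:R <= d.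
  rewrite -(@ler_pM2r _ n%:R) // -sumdeg.
  have -> : (mindeg g)%:R * n%:R = \sum_(v : 'I_n) ((mindeg g)%:R : R).
    by rewrite sumr_const card_ord mulr_natr.
  by apply: ler_sum => v _; rewrite ler_nat mindeg_le.
have dmax : d <= (maxdeg g)%:R.
  rewrite -(@ler_pM2r _ n%:R) // -sumdeg.
  have -> : (maxdeg g)%:R * n%:R = \sum_(v : 'I_n) ((maxdeg g)%:R : R).
    by rewrite sumr_const card_ord mulr_natr.
  by apply: ler_sum => v _; rewrite ler_nat maxdeg_ge.
have ub i : u i ^+ 2 <= (Rc * lam) ^+ 2.
  have -> : u i = (deg g i)%:R - d.
    by rewrite /u /z degE mulr1; under eq_bigr do rewrite mulr1.
  have h1 : ((mindeg g)%:R : R) <= (deg g i)%:R by rewrite ler_nat mindeg_le.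
  have h2 : ((deg g i)%:R : R) <= (maxdeg g)%:R by rewrite ler_nat maxdeg_ge.
  nra.
have Hsum : \sum_k (mu k - d) ^+ 2 * nm (c k) ^+ 2 <= n%:R * (Rc * lam) ^+ 2.
  have -> : \sum_k (mu k - d) ^+ 2 * nm (c k) ^+ 2 = \sum_i u i ^+ 2.
    by rewrite -pars; apply: eq_bigr => k _; rewrite nmu.
  have -> : n%:R * (Rc * lam) ^+ 2 = \sum_(i : 'I_n) (Rc * lam) ^+ 2.
    by rewrite sumr_const card_ord mulr_natl.
  by apply: ler_sum => i _; apply: ub.
have H4 : (mu k0 - d) ^+ 2 * nm (c k0) ^+ 2 + (d - lam) ^+ 2 * G
    <= n%:R * Rc ^+ 2 * lam ^+ 2.
  have -> : n%:R * Rc ^+ 2 * lam ^+ 2 = n%:R * (Rc * lam) ^+ 2 by ring.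
  apply: (le_trans _ Hsum); rewrite split lerD2l /G mulr_sumr.
  apply: ler_sum => k kk0; apply: ler_wpM2r; first by apply: sqr_ge0.
  have := hk0 k kk0; rewrite ler_norml => /andP[h1 h2].
  have h3 : d - lam <= d - mu k by lra.
  have h4 : 0 <= d - lam by lra.
  have := ler_pM h4 h4 h3 h3; rewrite -!expr2 -sqrrN opprB; lra.
have gg0 : 0 <= nm (c k0) by apply: nm_ge0.
have la0 : 0 <= nm (a k0) by apply: nm_ge0.
have lb0 : 0 <= nm (b k0) by apply: nm_ge0.
rewrite -[_ * nm (c k0) * nm (c k0)]mulrA -expr2.
have -> : (10 * Rc + 1) * lam * (X * Y) = (10 * Rc + 1) * lam * X * Y by rewrite mulrA.
by apply: (@core' lam Rc d n%:R X Y (nm (a k0)) (nm (b k0)) (nm (c k0)) p q r G (mu k0)).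
Qed.
End Key.

Unset Implicit Arguments.
Local Open Scope classical_set_scope.

Lemma lim_ext (R : realType) (f : nat -> R) (e : R) : 0 < e ->
  (f n) @[n --> \oo] --> (0 : R) -> exists N : nat, forall n, (N <= n)%N -> `|f n| < e.
Proof.
move=> e0 /cvgrPdist_lt /(_ e e0) [N _ HN]. exists N => n Nn.
have := HN n Nn. by rewrite sub0r normrN.
Qed.


Theorem mainTheorem7 (R : realType) (G : forall n : nat, rel 'I_n)
    (lam : nat -> R) (Rc : R) :
  (forall n, simple_graph (G n)) ->
  (forall n, exists s : seq R, adj_spectrum (G n) s /\
     forall i : nat, (0 < i < n)%N -> `|s`_i| <= lam n) ->
  0 < Rc ->
  (forall n, (maxdeg (G n))%:R - (mindeg (G n))%:R <= Rc * lam n) ->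
  (lam n / avgdeg R (G n)) @[n --> \oo] --> (0 : R) ->
  exists N : nat, forall n : nat, (N <= n)%N ->
    forall U W : {set 'I_n},
      `| (edges_between (G n) U W)%:R
         - avgdeg R (G n) / n%:R * #|U|%:R * #|W|%:R |
      <= (10 * Rc + 1) * lam n * Num.sqrt (#|U|%:R * #|W|%:R).
Proof.
move=> Hsg Hspec Rc0 HdR Hlim.
have e1 : 0 < (1 / 2 : R) by [].
have e2 : 0 < (1 / (4 * Rc) : R) by rewrite divr_gt0 // mulr_gt0.
have [N1 H1] := @lim_ext R _ _ e1 Hlim.
have [N2 H2] := @lim_ext R _ _ e2 Hlim.
exists (maxn N1 N2) => n Nn.
apply: (key (Hsg n) (Hspec n) Rc0 (HdR n)) => dp.
have h1 := H1 n (leq_trans (leq_maxl _ _) Nn).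
have h2 := H2 n (leq_trans (leq_maxr _ _) Nn).
have l1 := le_lt_trans (ler_norm _) h1.
have l2 := le_lt_trans (ler_norm _) h2.
rewrite ltr_pdivrMr // in l1; rewrite ltr_pdivrMr // in l2.
split.
  apply: ltW; move: l1; set d := avgdeg R (G n); lra.
apply: ltW; move: l2; set d := avgdeg R (G n).
move=> h.
have E : 4 * Rc * (1 / (4 * Rc) * d) = d by field; rewrite gt_eqF.
rewrite -[X in _ < X]E ltr_pM2l; [exact: h | apply: mulr_gt0 => //].
Qed.
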